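(* Let $\langle B,\wedge,{}'\rangle$ be an algebra with $\wedge$ binary and ${}'$ unary satisfying $x\wedge(y\wedge z)\approx z\wedge(y\wedge x)$, $x''\approx x$, and $x'\approx (x\wedge y)'\wedge(x\wedge y')'$. Then $x'\wedge y'=y'\wedge x'$ for all $x,y\in B$. *)

From Stdlib Require Import Setoid.

Theorem lemma7p6 (B : Type) (meet : B -> B -> B) (c : B -> B)
  (Hassoc : forall x y z : B, meet x (meet y z) = meet z (meet y x))
  (Hinv : forall x : B, c (c x) = x)
  (Hsplit : forall x y : B, c x = meet (c (meet x y)) (c (meet x (c y)))) :
  forall x y : B, meet (c x) (c y) = meet (c y) (c x).
Proof.
  intros a b.
  assert (E3 : forall v0 v1 v2 : B, (meet v0 (meet v1 v2)) = (meet v2 (meet v1 v0))).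
  { intros v0 v1 v2. exact (Hassoc v0 v1 v2). }
  assert (E4 : forall v0 : B, (c (c v0)) = v0).
  { intros v0. exact (Hinv v0). }
  assert (E5 : forall v0 v1 : B, (meet (c (meet v0 v1)) (c (meet v0 (c v1)))) = (c v0)).
  { intros v0 v1. exact (eq_sym (Hsplit v0 v1)). }
  assert (E6 : forall v0 v1 : B, (meet (c (meet v0 (c v1))) (c (meet v0 v1))) = (c v0)).
  { intros v0 v1. exact (eq_trans (f_equal (fun h : B => (meet (c (meet v0 (c v1))) (c (meet v0 h)))) (eq_sym (E4 v1))) (E5 v0 (c v1))). }
  assert (E12 : forall v0 v1 : B, (meet (c (meet (c v0) (meet v1 (c (meet v1 v0))))) v1) = (meet v1 v0)).
  { intros v0 v1. exact (eq_trans (f_equal (fun h : B => (meet (c (meet (c v0) (meet v1 (c (meet v1 v0))))) h)) (eq_sym (E4 v1))) (eq_trans (f_equal (fun h : B => (meet (c h) (c (c v1)))) (eq_sym (E3 (c (meet v1 v0)) v1 (c v0)))) (eq_trans (f_equal (fun h : B => (meet (c (meet (c (meet v1 v0)) (meet v1 (c v0)))) (c h))) (eq_sym (E5 v1 v0))) (eq_trans (E5 (c (meet v1 v0)) (meet v1 (c v0))) (E4 (meet v1 v0)))))). }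
  assert (E14 : forall v0 v1 : B, (meet v0 (c (meet (c v1) (meet v0 (c (meet v0 v1)))))) = (meet v0 v1)).
  { intros v0 v1. exact (eq_trans (f_equal (fun h : B => (meet v0 (c h))) (eq_sym (E3 (c (meet v0 v1)) v0 (c v1)))) (eq_trans (f_equal (fun h : B => (meet h (c (meet (c (meet v0 v1)) (meet v0 (c v1)))))) (eq_sym (E4 v0))) (eq_trans (f_equal (fun h : B => (meet (c h) (c (meet (c (meet v0 v1)) (meet v0 (c v1)))))) (eq_sym (E5 v0 v1))) (eq_trans (E6 (c (meet v0 v1)) (meet v0 (c v1))) (E4 (meet v0 v1)))))). }
  assert (E16 : forall v0 v1 v2 : B, (meet v0 (meet (c (meet (c v1) (meet v0 (c (meet v0 v1))))) v2)) = (meet v2 (meet v0 v1))).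
  { intros v0 v1 v2. exact (eq_trans (eq_sym (E3 v2 (c (meet (c v1) (meet v0 (c (meet v0 v1))))) v0)) (f_equal (fun h : B => (meet v2 h)) (E12 v1 v0))). }
  assert (E17 : forall v0 v1 v2 : B, (meet (c (meet (c v0) (meet v1 (c (meet v1 v0))))) (meet v1 v2)) = (meet v2 (meet v1 v0))).
  { intros v0 v1 v2. exact (eq_trans (eq_sym (E3 v2 v1 (c (meet (c v0) (meet v1 (c (meet v1 v0))))))) (f_equal (fun h : B => (meet v2 h)) (E14 v1 v0))). }
  assert (E18 : forall v0 v1 v2 : B, (meet (meet v0 v1) (meet v0 v2)) = (meet v0 (meet v1 (meet v0 v2)))).
  { intros v0 v1 v2. exact (eq_trans (eq_sym (E16 v0 v2 (meet v0 v1))) (f_equal (fun h : B => (meet v0 h)) (E17 v2 v0 v1))). }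
  assert (Key : forall x y z : B, meet (meet x y) (meet x z) = meet (meet x z) (meet y x)).
  { intros x y z. rewrite E18. apply Hassoc. }
  set (w := c a). set (z := c b).
  set (P := c (meet (c w) (meet a (c z)))).
  set (Q := c (meet (c w) (c (meet a (c z))))).
  set (S := c (meet (c z) (c (meet a (c w))))).
  assert (HP : P = c (meet (c z) (meet a (c w)))) by (unfold P; rewrite Hassoc; reflexivity).
  assert (Hw1 : w = meet P Q) by (rewrite <- (Hinv w) at 1; apply Hsplit).
  assert (Hw2 : w = meet Q P).
  { rewrite <- (Hinv w) at 1. rewrite (Hsplit (c w) (c (meet a (c z)))). rewrite Hinv. reflexivity. }
  assert (Hz : z = meet P S) by (rewrite HP; rewrite <- (Hinv z) at 1; apply Hsplit).
  rewrite Hz. rewrite Hw1 at 1. rewrite Key. rewrite <- Hw2. reflexivity.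
Qed.
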